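(* Let $i,j\in\{1,2\}$ and let $\varphi(x)$ be a formula of the correspondence language whose only free variable is $x$. Then $\varphi(x)$ is logically equivalent to $ST_{ij}(I,x)$ for some modal intuitionistic formula $I$ if and only if there exists $k\in\mathbb{N}$ such that $\varphi(x)$ is invariant with respect to $(i,j)$-modal $k$-asimulations.
   Context: Correspondence language: classical first-order logic without identity over the vocabulary $\Sigma=\{R,R_\Box,R_\Diamond,P_1,P_2,\dots\}$, where $R,R_\Box,R_\Diamond$ are binary and each $P_n$ is unary; connectives $\bot,\to,\vee,\wedge$ and quantifiers $\forall,\exists$. $\Theta$ denotes a subset of $\Sigma$ containing $R,R_\Box,R_\Diamond$; a $\Theta$-model $M=\langle U,\iota\rangle$ interprets the letters of $\Theta$. For models $M_k=\langle U_k,\iota_k\rangle$ write $R_k=\iota_k(R)$, $R_{\Box k}=\iota_k(R_\Box)$, $R_{\Diamond k}=\iota_k(R_\Diamond)$. For a formula $\varphi$, $\Sigma_\varphi=\{R,R_\Box,R_\Diamond\}\cup\{P_n: P_n\text{ occurs in }\varphi\}$. For $\varphi(x)$ with sole free variable $x$, $M,a\models\varphi(x)$ means $\varphi$ holds under any assignment sending $x$ to $a$; $a\models_k\varphi(x)$ abbreviates $M_k,a\models\varphi(x)$. $s\overset{\leftrightarrow}{A}t$ means $sAt$ and $tAs$. Modal intuitionistic formulas are built from propositional letters $p_n$ and $\bot$ with $\wedge,\vee,\to,\Box,\Diamond$. For $i,j\in\{1,2\}$ the standard translation $ST_{ij}$ is: $ST_{ij}(p_n,x)=P_n(x)$; $ST_{ij}(\bot,x)=\bot$;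 $ST_{ij}$ commutes with $\wedge,\vee$; $ST_{ij}(I\to J,x)=\forall y(R(x,y)\to(ST_{ij}(I,y)\to ST_{ij}(J,y)))$; $ST_{1j}(\Box I,x)=\forall y(R_\Box(x,y)\to ST_{1j}(I,y))$; $ST_{2j}(\Box I,x)=\forall y(R(x,y)\to\forall z(R_\Box(y,z)\to ST_{2j}(I,z)))$; $ST_{i1}(\Diamond I,x)=\exists y(R_\Diamond(x,y)\wedge ST_{i1}(I,y))$; $ST_{i2}(\Diamond I,x)=\forall y(R(x,y)\to\exists z(R_\Diamond(y,z)\wedge ST_{i2}(I,z)))$ (bound variables fresh). $k$-asimulation conditions. Let $(M_1,t),(M_2,u)$ be pointed $\Theta$-models and $k\in\mathbb{N}$. Relations $A,B$ relate finite nonempty tuples. The following conditions are required for all $i,j\in\{1,2\}$, all $m$, all $\bar a_m,a,c,e\in U_i$, $\bar b_m,b,d,f\in U_j$ and all unary $P\in\Theta$: (p-type) $A\subseteq\bigcup_{n>0}((U_1^n\times U_2^n)\cup(U_2^n\times U_1^n))$; (p-B-type) same for $B$; (elem) $t\,A\,u$; (p-base) if $(\bar a_m,a)A(\bar b_m,b)$ and $a\models_i P(x)$ then $b\models_j P(x)$; (p-step) if $(\bar a_m,a)A(\bar b_m,b)$, $bR_jd$ and $m<k$ then there is $c\in U_i$ with $aR_ic$ and $(\bar a_m,a,c)\overset{\leftrightarrow}{A}(\bar b_m,b,d)$; (p-box-2) if $(\bar a_m,a)A(\bar b_m,b)$, $bR_jd$, $dR_{\Box j}f$ and $m+1<k$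 then there are $c,e\in U_i$ with $aR_ic$, $cR_{\Box i}e$ and $(\bar a_m,a,c,e)A(\bar b_m,b,d,f)$; (p-box-1) if $(\bar a_m,a)A(\bar b_m,b)$, $bR_{\Box j}d$ and $m<k$ then there is $c\in U_i$ with $aR_{\Box i}c$ and $(\bar a_m,a,c)A(\bar b_m,b,d)$; (p-diam-1) if $(\bar a_m,a)A(\bar b_m,b)$, $aR_{\Diamond i}c$ and $m<k$ then there is $d\in U_j$ with $bR_{\Diamond j}d$ and $(\bar a_m,a,c)A(\bar b_m,b,d)$; (p-diam-2(1)) if $(\bar a_m,a)A(\bar b_m,b)$, $bR_jd$ and $m+1<k$ then there is $c\in U_i$ with $aR_ic$ and $(\bar a_m,a,c)B(\bar b_m,b,d)$; (p-diam-2(2)) if $(\bar a_m,a)B(\bar b_m,b)$, $aR_{\Diamond i}c$ and $m<k$ then there is $d\in U_j$ with $bR_{\Diamond j}d$ and $(\bar a_m,a,c)A(\bar b_m,b,d)$. A $(2,1)$-modal $\langle(M_1,t),(M_2,u)\rangle_k$-asimulation is a relation $A$ satisfying p-type, elem, p-base, p-step, p-box-2, p-diam-1; a $(1,1)$-modal one is a relation $A$ satisfying p-type, elem, p-base, p-step, p-box-1, p-diam-1; a $(2,2)$-modal one is a pair $(A,B)$ satisfying p-type, p-B-type, elem, p-base, p-step, p-box-2, p-diam-2(1), p-diam-2(2); a $(1,2)$-modal one is a pair $(A,B)$ satisfying p-type, p-B-type, elem, p-base, p-step, p-box-1, p-diam-2(1), p-diam-2(2). Invariance: $\varphi(x)$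 is invariant with respect to $(i,j)$-modal $k$-asimulations iff for every $\Theta\supseteq\Sigma_\varphi$, all pointed $\Theta$-models $(M_1,t),(M_2,u)$, every $(i,j)$-modal $\langle(M_1,t),(M_2,u)\rangle_k$-asimulation (for $j=2$, its first component $A$ is used), and all $a\in U_1$, $b\in U_2$ with $aAb$ (as one-element tuples): if $a\models_1\varphi(x)$ then $b\models_2\varphi(x)$. *)

(* Defs.v *)
From Stdlib Require Import List Arith.
Import ListNotations.

Inductive brel := RR | RBox | RDia.

(* variables are natural numbers; P n is the unary letter P_n *)
Inductive fo : Type :=
| FBot : fo
| FRel : brel -> nat -> nat -> fo
| FP : nat -> nat -> fo
| FImp : fo -> fo -> fo
| FOr : fo -> fo -> fo
| FAnd : fo -> fo -> fo
| FAll : nat -> fo -> fo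
| FEx : nat -> fo -> fo.

Fixpoint free_in (v : nat) (phi : fo) : Prop :=
  match phi with
  | FBot => False
  | FRel _ a b => v = a \/ v = b
  | FP _ a => v = a
  | FImp p q | FOr p q | FAnd p q => free_in v p \/ free_in v q
  | FAll y p | FEx y p => v <> y /\ free_in v p
  end.

Fixpoint occursP (n : nat) (phi : fo) : Prop :=
  match phi with
  | FBot => False
  | FRel _ _ _ => False
  | FP m _ => n = m
  | FImp p q | FOr p q | FAnd p q => occursP n p \/ occursP n q
  | FAll _ p | FEx _ p => occursP n p
  end.

(* A structure interpreting all of Sigma.  A Theta-model is represented by
   such a structure of which only the letters in Theta are relevant. *)
Record model : Type := Model {
  dom : Type;
  iR : dom -> dom -> Prop;
  iBox : dom -> dom -> Prop;
  iDia : dom -> dom -> Prop;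
  iP : nat -> dom -> Prop }.

Definition irel (M : model) (r : brel) : dom M -> dom M -> Prop :=
  match r with RR => iR M | RBox => iBox M | RDia => iDia M end.

Definition upd {U : Type} (g : nat -> U) (x : nat) (a : U) : nat -> U :=
  fun v => if Nat.eqb v x then a else g v.

Fixpoint sat (M : model) (g : nat -> dom M) (phi : fo) : Prop :=
  match phi with
  | FBot => False
  | FRel r a b => irel M r (g a) (g b)
  | FP n a => iP M n (g a)
  | FImp p q => sat M g p -> sat M g q
  | FOr p q => sat M g p \/ sat M g q
  | FAnd p q => sat M g p /\ sat M g q
  | FAll y p => forall a : dom M, sat M (upd g y a) p
  | FEx y p => exists a : dom M, sat M (upd g y a) p
  end.

Definition log_equiv (phi psi : fo) : Prop :=
  forall (M : model) (g : nat -> dom M), sat M g phi <-> sat M g psi.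

Definition sat_at (M : model) (a : dom M) (x : nat) (phi : fo) : Prop :=
  forall g : nat -> dom M, g x = a -> sat M g phi.

Inductive mform : Type :=
| MVar : nat -> mform
| MBot : mform
| MAnd : mform -> mform -> mform
| MOr : mform -> mform -> mform
| MImp : mform -> mform -> mform
| MBox : mform -> mform
| MDia : mform -> mform.

Inductive idx := I1 | I2.

(* ST_{ij}(I, x); bound variables x+1, x+2 are fresh w.r.t. the only free variable x *)
Fixpoint ST (i j : idx) (I : mform) (x : nat) : fo :=
  let y := S x in let z := S (S x) in
  match I with
  | MVar n => FP n x
  | MBot => FBot
  | MAnd A B => FAnd (ST i j A x) (ST i j B x)
  | MOr A B => FOr (ST i j A x) (ST i j B x)
  | MImp A B => FAll y (FImp (FRel RR x y) (FImp (ST i j A y) (ST i j B y)))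
  | MBox A =>
      match i with
      | I1 => FAll y (FImp (FRel RBox x y) (ST i j A y))
      | I2 => FAll y (FImp (FRel RR x y)
                (FAll z (FImp (FRel RBox y z) (ST i j A z))))
      end
  | MDia A =>
      match j with
      | I1 => FEx y (FAnd (FRel RDia x y) (ST i j A y))
      | I2 => FAll y (FImp (FRel RR x y)
                (FEx z (FAnd (FRel RDia y z) (ST i j A z))))
      end
  end.

(* Tuples are lists; the tuple (a_1..a_m, a) is  as ++ [a].
   A relation A between tuples of U_1 and U_2 (in either direction) is
   represented by its two parts A12 : tuples of U1 -> tuples of U2 and
   A21 : tuples of U2 -> tuples of U1 (this encodes that A relates only
   U_1^n x U_2^n or U_2^n x U_1^n pairs). *)

Definition tupR (U V : Type) := list U -> list V -> Prop.

(* p-type / p-B-type (the remaining part: equal positive length) *)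
Definition p_type {U V} (A : tupR U V) : Prop :=
  forall s t, A s t -> length s = length t /\ 0 < length s.

Section Conds.
Variables (Th : nat -> Prop) (k : nat) (Mi Mj : model).
Let Ui := dom Mi.
Let Uj := dom Mj.
Variables (A B : tupR Ui Uj) (A' : tupR Uj Ui).

Definition p_base : Prop :=
  forall (as_ : list Ui) (bs : list Uj) (a : Ui) (b : Uj) (P : nat),
    length bs = length as_ -> A (as_ ++ [a]) (bs ++ [b]) ->
    Th P -> iP Mi P a -> iP Mj P b.

Definition p_step : Prop :=
  forall (as_ : list Ui) (bs : list Uj) (a : Ui) (b : Uj) (d : Uj),
    length bs = length as_ -> A (as_ ++ [a]) (bs ++ [b]) ->
    iR Mj b d -> length as_ < k ->
    exists c : Ui, iR Mi a c /\ A (as_ ++ [a; c]) (bs ++ [b; d])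
                   /\ A' (bs ++ [b; d]) (as_ ++ [a; c]).

Definition p_box_2 : Prop :=
  forall (as_ : list Ui) (bs : list Uj) (a : Ui) (b d f : Uj),
    length bs = length as_ -> A (as_ ++ [a]) (bs ++ [b]) ->
    iR Mj b d -> iBox Mj d f -> length as_ + 1 < k ->
    exists c e : Ui, iR Mi a c /\ iBox Mi c e /\
                     A (as_ ++ [a; c; e]) (bs ++ [b; d; f]).

Definition p_box_1 : Prop :=
  forall (as_ : list Ui) (bs : list Uj) (a : Ui) (b d : Uj),
    length bs = length as_ -> A (as_ ++ [a]) (bs ++ [b]) ->
    iBox Mj b d -> length as_ < k ->
    exists c : Ui, iBox Mi a c /\ A (as_ ++ [a; c]) (bs ++ [b; d]).

Definition p_diam_1 : Prop :=
  forall (as_ : list Ui) (bs : list Uj) (a c : Ui) (b : Uj),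
    length bs = length as_ -> A (as_ ++ [a]) (bs ++ [b]) ->
    iDia Mi a c -> length as_ < k ->
    exists d : Uj, iDia Mj b d /\ A (as_ ++ [a; c]) (bs ++ [b; d]).

Definition p_diam_2_1 : Prop :=
  forall (as_ : list Ui) (bs : list Uj) (a : Ui) (b d : Uj),
    length bs = length as_ -> A (as_ ++ [a]) (bs ++ [b]) ->
    iR Mj b d -> length as_ + 1 < k ->
    exists c : Ui, iR Mi a c /\ B (as_ ++ [a; c]) (bs ++ [b; d]).

Definition p_diam_2_2 : Prop :=
  forall (as_ : list Ui) (bs : list Uj) (a c : Ui) (b : Uj),
    length bs = length as_ -> B (as_ ++ [a]) (bs ++ [b]) ->
    iDia Mi a c -> length as_ < k ->
    exists d : Uj, iDia Mj b d /\ A (as_ ++ [a; c]) (bs ++ [b; d]).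

Definition dir_conds (bi bj : idx) : Prop :=
  p_base /\ p_step /\
  (match bi with I1 => p_box_1 | I2 => p_box_2 end) /\
  (match bj with I1 => p_diam_1 | I2 => p_diam_2_1 /\ p_diam_2_2 end).
End Conds.

(* (bi,bj)-modal <(M1,t),(M2,u)>_k-asimulation over Theta, given as the
   pair A = (A12, A21) and B = (B12, B21) (B is ignored when bj = I1). *)
Definition modal_asim (bi bj : idx) (Th : nat -> Prop) (k : nat)
  (M1 : model) (t : dom M1) (M2 : model) (u : dom M2)
  (A12 B12 : tupR (dom M1) (dom M2)) (A21 B21 : tupR (dom M2) (dom M1)) : Prop :=
  p_type A12 /\ p_type A21 /\
  (match bj with I1 => True | I2 => p_type B12 /\ p_type B21 end) /\
  A12 [t] [u] /\
  dir_conds Th k M1 M2 A12 B12 A21 bi bj /\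
  dir_conds Th k M2 M1 A21 B21 A12 bi bj.

Definition invariant (bi bj : idx) (k : nat) (x : nat) (phi : fo) : Prop :=
  forall (Th : nat -> Prop), (forall n, occursP n phi -> Th n) ->
  forall (M1 : model) (t : dom M1) (M2 : model) (u : dom M2),
    match bj with
    | I1 =>
        forall (A12 : tupR (dom M1) (dom M2)) (A21 : tupR (dom M2) (dom M1)),
          modal_asim bi bj Th k M1 t M2 u A12 (fun _ _ => False) A21 (fun _ _ => False) ->
          forall (a : dom M1) (b : dom M2), A12 [a] [b] ->
            sat_at M1 a x phi -> sat_at M2 b x phi
    | I2 =>
        forall (A12 B12 : tupR (dom M1) (dom M2)) (A21 B21 : tupR (dom M2) (dom M1)),
          modal_asim bi bj Th k M1 t M2 u A12 B12 A21 B21 ->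
          forall (a : dom M1) (b : dom M2), A12 [a] [b] ->
            sat_at M1 a x phi -> sat_at M2 b x phi
    end.

(* Main.v *)
Require Import Defs.
From Stdlib Require Import List Arith Lia Classical ClassicalEpsilon.
Import ListNotations.

Lemma upd_eq {U} (g : nat -> U) v a : upd g v a v = a.
Proof. unfold upd. rewrite Nat.eqb_refl. reflexivity. Qed.
Lemma upd_neq {U} (g : nat -> U) v a w : w <> v -> upd g v a w = g w.
Proof. intro H. unfold upd. destruct (Nat.eqb_spec w v); [contradiction|reflexivity]. Qed.

Lemma sat_ext M phi : forall g g' : nat -> dom M,
  (forall v, free_in v phi -> g v = g' v) -> (sat M g phi <-> sat M g' phi).
Proof.
  induction phi; intros g g' H; simpl in *.
  - tauto.
  - rewrite (H n (or_introl eq_refl)), (H n0 (or_intror eq_refl)). tauto.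
  - rewrite (H n0 eq_refl). tauto.
  - rewrite (IHphi1 g g'), (IHphi2 g g'); [tauto|intros; apply H; tauto..].
  - rewrite (IHphi1 g g'), (IHphi2 g g'); [tauto|intros; apply H; tauto..].
  - rewrite (IHphi1 g g'), (IHphi2 g g'); [tauto|intros; apply H; tauto..].
  - split; intros H1 a; [rewrite <- (IHphi (upd g n a))|rewrite (IHphi (upd g n a) (upd g' n a))]; auto;
    intros v Hv; unfold upd; destruct (Nat.eqb_spec v n); auto.
  - split; intros [a H1]; exists a; [rewrite <- (IHphi (upd g n a))|rewrite (IHphi (upd g n a) (upd g' n a))]; auto;
    intros v Hv; unfold upd; destruct (Nat.eqb_spec v n); auto.
Qed.

Definition maskP (M : model) (P' : nat -> dom M -> Prop) : model :=
  Model (dom M) (iR M) (iBox M) (iDia M) P'.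

Lemma sat_maskP M P' phi : (forall n, occursP n phi -> forall a, P' n a <-> iP M n a) ->
  forall g : nat -> dom M, sat M g phi <-> sat (maskP M P') g phi.
Proof.
  induction phi; intros H g; simpl in *.
  - tauto.
  - destruct b; simpl; tauto.
  - rewrite H; auto. tauto.
  - rewrite IHphi1, IHphi2; auto; tauto.
  - rewrite IHphi1, IHphi2; auto; tauto.
  - rewrite IHphi1, IHphi2; auto; tauto.
  - split; intros H1 a; apply IHphi; auto.
  - split; intros [a H1]; exists a; apply IHphi; auto.
Qed.

Section Modal.
Variables (i j : idx).

Fixpoint msat (M : model) (w : dom M) (I : mform) : Prop :=
  match I with
  | MVar n => iP M n w
  | MBot => False
  | MAnd A B => msat M w A /\ msat M w B
  | MOr A B => msat M w A \/ msat M w B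
  | MImp A B => forall v, iR M w v -> msat M v A -> msat M v B
  | MBox A => match i with
      | I1 => forall v, iBox M w v -> msat M v A
      | I2 => forall v, iR M w v -> forall u, iBox M v u -> msat M u A end
  | MDia A => match j with
      | I1 => exists v, iDia M w v /\ msat M v A
      | I2 => forall v, iR M w v -> exists u, iDia M v u /\ msat M u A end
  end.

Lemma nSx x : x <> S x. Proof. lia. Qed.
Lemma nSSx x : S x <> S (S x). Proof. lia. Qed.
Lemma nSSx' x : x <> S (S x). Proof. lia. Qed.

Lemma ST_msat M I : forall x (g : nat -> dom M), sat M g (ST i j I x) <-> msat M (g x) I.
Proof.
  induction I; intros x g; simpl.
  - tauto.
  - tauto.
  - rewrite IHI1, IHI2; tauto.
  - rewrite IHI1, IHI2; tauto.
  - split; intros H a.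
    + specialize (H a). rewrite upd_eq, upd_neq in H by apply nSx.
      rewrite IHI1, IHI2, upd_eq in H. exact H.
    + rewrite upd_eq, upd_neq by apply nSx. rewrite IHI1, IHI2, upd_eq. apply H.
  - destruct i; simpl.
    + split; intros H a.
      * specialize (H a). rewrite upd_eq, upd_neq in H by apply nSx. rewrite IHI, upd_eq in H. exact H.
      * rewrite upd_eq, upd_neq by apply nSx. rewrite IHI, upd_eq. apply H.
    + split; intros H a.
      * specialize (H a). rewrite upd_eq, upd_neq in H by apply nSx. intros Ha b Hb.
        specialize (H Ha b). rewrite upd_eq, upd_neq in H by apply nSSx. rewrite upd_eq in H.
        rewrite IHI, upd_eq in H. auto.
      * rewrite upd_eq, upd_neq by apply nSx. intros Ha b.
        rewrite upd_eq, upd_neq by apply nSSx. rewrite upd_eq, IHI, upd_eq. apply H; auto.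
  - destruct j; simpl.
    + split; intros [a H]; exists a.
      * rewrite upd_eq, upd_neq in H by apply nSx. rewrite IHI, upd_eq in H. exact H.
      * rewrite upd_eq, upd_neq by apply nSx. rewrite IHI, upd_eq. exact H.
    + split; intros H a.
      * specialize (H a). rewrite upd_eq, upd_neq in H by apply nSx. intros Ha.
        destruct (H Ha) as [b Hb]. exists b.
        rewrite upd_eq, upd_neq in Hb by apply nSSx. rewrite upd_eq in Hb.
        rewrite IHI, upd_eq in Hb. auto.
      * rewrite upd_eq, upd_neq by apply nSx. intros Ha.
        destruct (H a Ha) as [b Hb]. exists b.
        rewrite upd_eq, upd_neq by apply nSSx. rewrite upd_eq, IHI, upd_eq. auto.
Qed.
End Modal.
Section Pres.
Variables (i j : idx) (k : nat) (Th : nat -> Prop).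

Fixpoint mdepth (I : mform) : nat :=
  match I with
  | MVar _ | MBot => 0
  | MAnd A B | MOr A B => max (mdepth A) (mdepth B)
  | MImp A B => S (max (mdepth A) (mdepth B))
  | MBox A => (match i with I1 => 1 | I2 => 2 end) + mdepth A
  | MDia A => (match j with I1 => 1 | I2 => 2 end) + mdepth A
  end.

Lemma app2 {U} (l : list U) a c : l ++ [a; c] = (l ++ [a]) ++ [c].
Proof. rewrite <- app_assoc. reflexivity. Qed.
Lemma app3 {U} (l : list U) a c e : l ++ [a; c; e] = (l ++ [a; c]) ++ [e].
Proof. rewrite <- app_assoc. reflexivity. Qed.

Lemma pres I : forall (Mi Mj : model) A B A' B',
  (forall P a, iP Mi P a -> Th P) ->
  (forall P a, iP Mj P a -> Th P) ->
  dir_conds Th k Mi Mj A B A' i j -> dir_conds Th k Mj Mi A' B' A i j ->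
  forall as_ bs a b, length bs = length as_ -> A (as_ ++ [a]) (bs ++ [b]) ->
  length as_ + mdepth I <= k -> msat i j Mi a I -> msat i j Mj b I.
Proof.
  induction I; intros Mi Mj A B A' B' Hi Hj D1 D2 as_ bs a b Hl HA Hd; simpl in *.
  - destruct D1 as (Hb & _). intro H. eapply Hb; [exact Hl|exact HA|eapply Hi; exact H|exact H].
  - tauto.
  - intros [H1 H2]. split; [apply (IHI1 Mi Mj A B A' B' Hi Hj D1 D2 as_ bs a b Hl HA)|
      apply (IHI2 Mi Mj A B A' B' Hi Hj D1 D2 as_ bs a b Hl HA)]; auto; lia.
  - intros [H1|H2]; [left; apply (IHI1 Mi Mj A B A' B' Hi Hj D1 D2 as_ bs a b Hl HA)|
      right; apply (IHI2 Mi Mj A B A' B' Hi Hj D1 D2 as_ bs a b Hl HA)]; auto; lia.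
  - intros H d Hbd Hd1. pose proof D1 as (_ & Hs & _).
    destruct (Hs as_ bs a b d Hl HA Hbd ltac:(lia)) as (c & Hac & H1 & H2).
    rewrite !app2 in H1, H2.
    apply (IHI2 Mi Mj A B A' B' Hi Hj D1 D2 (as_ ++ [a]) (bs ++ [b]) c d);
      [rewrite !length_app; simpl; lia|exact H1|rewrite length_app; simpl; lia|].
    apply H; auto.
    apply (IHI1 Mj Mi A' B' A B Hj Hi D2 D1 (bs ++ [b]) (as_ ++ [a]) d c);
      [rewrite !length_app; simpl; lia|exact H2|rewrite length_app; simpl; lia|exact Hd1].
  - pose proof D1 as (_ & _ & Hx & _). destruct i; simpl in *.
    + intros H d Hbd. destruct (Hx as_ bs a b d Hl HA Hbd ltac:(lia)) as (c & Hac & H1).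
      rewrite !app2 in H1. apply (IHI Mi Mj A B A' B' Hi Hj D1 D2 (as_ ++ [a]) (bs ++ [b]) c d); auto; rewrite ?length_app; simpl; lia.
    + intros H d Hbd f Hdf. destruct (Hx as_ bs a b d f Hl HA Hbd Hdf ltac:(lia)) as (c & e & Hac & Hce & H1).
      rewrite !app3 in H1. apply (IHI Mi Mj A B A' B' Hi Hj D1 D2 (as_ ++ [a; c]) (bs ++ [b; d]) e f); [rewrite ?length_app; simpl; lia|exact H1|rewrite ?length_app; simpl; lia|exact (H c Hac e Hce)].
  - pose proof D1 as (_ & _ & _ & Hy). destruct j; simpl in *.
    + intros (c & Hac & H). destruct (Hy as_ bs a c b Hl HA Hac ltac:(lia)) as (d & Hbd & H1).
      exists d; split; auto.
      rewrite !app2 in H1. apply (IHI Mi Mj A B A' B' Hi Hj D1 D2 (as_ ++ [a]) (bs ++ [b]) c d); auto; rewrite ?length_app; simpl; lia.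
    + destruct Hy as [Hy1 Hy2]. intros H d Hbd.
      destruct (Hy1 as_ bs a b d Hl HA Hbd ltac:(lia)) as (c & Hac & H1).
      destruct (H c Hac) as (e & Hce & He).
      rewrite !app2 in H1.
      destruct (Hy2 (as_ ++ [a]) (bs ++ [b]) c e d ltac:(rewrite !length_app; simpl; lia) H1 Hce
        ltac:(rewrite length_app; simpl; lia)) as (f & Hdf & H2).
      exists f; split; auto. rewrite <- !app_assoc in H2; simpl in H2; rewrite !app3 in H2.
      apply (IHI Mi Mj A B A' B' Hi Hj D1 D2 (as_ ++ [a; c]) (bs ++ [b; d]) e f); auto; rewrite ?length_app; simpl; lia.
Qed.

Definition mask (M : model) : model := maskP M (fun n a => Th n /\ iP M n a).

Lemma mask_dir M1 M2 A B A' :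
  dir_conds Th k M1 M2 A B A' i j -> dir_conds Th k (mask M1) (mask M2) A B A' i j.
Proof.
  intros (Hb & Hs & Hx & Hy). split; [|split; [exact Hs|split; [exact Hx|exact Hy]]].
  intros as_ bs a b P Hl HA HP [_ H]. split; auto. eapply Hb; eauto.
Qed.
End Pres.
Fixpoint subs {U} (l : list U) : list (list U) :=
  match l with
  | [] => [[]]
  | a :: l' => map (cons a) (subs l') ++ subs l'
  end.

Lemma filter_subs {U} (f : U -> bool) l : In (filter f l) (subs l).
Proof.
  induction l as [|a l IH]; simpl; auto.
  destruct (f a); apply in_or_app; [left; apply in_map|right]; auto.
Qed.

Definition dec (P : Prop) : bool := if excluded_middle_informative P then true else false.
Lemma decP P : dec P = true <-> P.
Proof. unfold dec. destruct (excluded_middle_informative P); split; auto; discriminate. Qed.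

Definition top : mform := MImp MBot MBot.
Fixpoint conjL (l : list mform) : mform :=
  match l with [] => top | a :: l' => MAnd a (conjL l') end.
Fixpoint disjL (l : list mform) : mform :=
  match l with [] => MBot | a :: l' => MOr a (disjL l') end.
Definition dnf (SS : list (list mform)) : mform := disjL (map conjL SS).

Lemma conjL_sat i j M w l : msat i j M w (conjL l) <-> forall a, In a l -> msat i j M w a.
Proof.
  induction l as [|a l IH]; simpl.
  - split; [tauto|intros _ v _ H; exact H].
  - rewrite IH. split; [intros [H1 H2] b [<-|Hb]; auto|intros H; split; auto].
Qed.

Lemma disjL_sat i j M w l : msat i j M w (disjL l) <-> exists a, In a l /\ msat i j M w a.
Proof.
  induction l as [|a l IH]; simpl.
  - split; [tauto|intros (b & [] & _)].
  - rewrite IH. split.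
    + intros [H|(b & Hb & H)]; eauto.
    + intros (b & [<-|Hb] & H); eauto.
Qed.

Lemma dnf_sat i j M w SS : msat i j M w (dnf SS) <-> exists Sl, In Sl SS /\ msat i j M w (conjL Sl).
Proof.
  unfold dnf. rewrite disjL_sat. split.
  - intros (a & Ha & H). apply in_map_iff in Ha as (Sl & <- & HS). eauto.
  - intros (Sl & HS & H). exists (conjL Sl). split; auto. apply in_map; auto.
Qed.

Lemma msat_box1 i j M w A : i = I1 -> (msat i j M w (MBox A) <-> forall v, iBox M w v -> msat i j M v A).
Proof. intros ->. reflexivity. Qed.
Lemma msat_box2 i j M w A : i = I2 -> (msat i j M w (MBox A) <->
  forall v, iR M w v -> forall u, iBox M v u -> msat i j M u A).
Proof. intros ->. reflexivity. Qed.
Lemma msat_dia1 i j M w A : j = I1 -> (msat i j M w (MDia A) <-> exists v, iDia M w v /\ msat i j M v A).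
Proof. intros ->. reflexivity. Qed.
Lemma msat_dia2 i j M w A : j = I2 -> (msat i j M w (MDia A) <->
  forall v, iR M w v -> exists u, iDia M v u /\ msat i j M u A).
Proof. intros ->. reflexivity. Qed.

Section Back.
Variables (i j : idx) (k : nat) (Th : nat -> Prop) (vs : list nat)
  (Hvs : forall n, Th n -> In n vs).

Fixpoint At (r : nat) : list mform :=
  match r with
  | 0 => map MVar vs
  | S r => let L := At r in let SL := subs L in
     L ++ map (fun p => MImp (conjL (fst p)) (disjL (snd p))) (list_prod SL SL)
       ++ map (fun Sl => MBox (disjL Sl)) SL
       ++ map (fun Sl => MDia (conjL Sl)) SL
       ++ map (fun SS => MDia (dnf SS)) (subs SL)
  end.

Lemma At_S r : incl (At r) (At (S r)).
Proof. intros a H. simpl. apply in_or_app; auto. Qed.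
Lemma At_mono r r' : r <= r' -> incl (At r) (At r').
Proof.
  induction 1; [apply incl_refl|]. eapply incl_tran; eauto. apply At_S.
Qed.

Lemma At_imp r S1 S2 : In S1 (subs (At r)) -> In S2 (subs (At r)) ->
  In (MImp (conjL S1) (disjL S2)) (At (S r)).
Proof.
  intros H1 H2. simpl. apply in_or_app; right. apply in_or_app; left.
  apply in_map_iff. exists (S1, S2). split; auto. apply in_prod; auto.
Qed.
Lemma At_box r Sl : In Sl (subs (At r)) -> In (MBox (disjL Sl)) (At (S r)).
Proof.
  intros H. simpl. apply in_or_app; right. apply in_or_app; right.
  apply in_or_app; left. apply (in_map (fun Sl => MBox (disjL Sl))); auto.
Qed.
Lemma At_dia1 r Sl : In Sl (subs (At r)) -> In (MDia (conjL Sl)) (At (S r)).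
Proof.
  intros H. simpl. apply in_or_app; right. apply in_or_app; right.
  apply in_or_app; right. apply in_or_app; left. apply (in_map (fun Sl => MDia (conjL Sl))); auto.
Qed.
Lemma At_dia2 r SS : In SS (subs (subs (At r))) -> In (MDia (dnf SS)) (At (S r)).
Proof.
  intros H. simpl. apply in_or_app; right. apply in_or_app; right.
  apply in_or_app; right. apply in_or_app; right. apply (in_map (fun SS => MDia (dnf SS))); auto.
Qed.

Definition T (M N : model) (r : nat) (a : dom M) (b : dom N) : Prop :=
  forall al, In al (At r) -> msat i j M a al -> msat i j N b al.

Definition dia (M : model) (c : dom M) (X : mform) : Prop :=
  exists e, iDia M c e /\ msat i j M e X.

Definition TB (M N : model) (r : nat) (c : dom M) (d : dom N) : Prop :=
  forall Sl, In Sl (subs (At (r - 1))) -> dia M c (conjL Sl) -> dia N d (conjL Sl).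

Definition AT (M N : model) : tupR (dom M) (dom N) := fun s t =>
  exists as_ bs a b, s = as_ ++ [a] /\ t = bs ++ [b] /\ length as_ = length bs /\
     T M N (k - length as_) a b.
Definition BT (M N : model) : tupR (dom M) (dom N) := fun s t =>
  exists as_ bs a b, s = as_ ++ [a] /\ t = bs ++ [b] /\ length as_ = length bs /\
     TB M N (k - length as_) a b.

Lemma AT_elim M N as_ bs a b : AT M N (as_ ++ [a]) (bs ++ [b]) -> T M N (k - length as_) a b.
Proof.
  intros (as' & bs' & a' & b' & E1 & E2 & _ & H).
  apply app_inj_tail in E1 as [-> ->]. apply app_inj_tail in E2 as [-> ->]. exact H.
Qed.
Lemma BT_elim M N as_ bs a b : BT M N (as_ ++ [a]) (bs ++ [b]) -> TB M N (k - length as_) a b.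
Proof.
  intros (as' & bs' & a' & b' & E1 & E2 & _ & H).
  apply app_inj_tail in E1 as [-> ->]. apply app_inj_tail in E2 as [-> ->]. exact H.
Qed.
Lemma AT_intro M N as_ bs a b : length as_ = length bs -> T M N (k - length as_) a b ->
  AT M N (as_ ++ [a]) (bs ++ [b]).
Proof. intros. exists as_, bs, a, b. auto. Qed.

Lemma AT_type M N : p_type (AT M N).
Proof.
  intros s t (as_ & bs & a & b & -> & -> & Hl & _). rewrite !length_app; simpl; lia.
Qed.
Lemma BT_type M N : p_type (BT M N).
Proof.
  intros s t (as_ & bs & a & b & -> & -> & Hl & _). rewrite !length_app; simpl; lia.
Qed.

Lemma notT M N r a b : ~ T M N r a b -> exists al, In al (At r) /\ msat i j M a al /\ ~ msat i j N b al.
Proof.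
  intro H. apply NNPP. intro H1. apply H. intros al Hal Ha. apply NNPP. intro Hb.
  apply H1. eauto.
Qed.

Definition up (M : model) (w : dom M) r := filter (fun al => dec (msat i j M w al)) (At r).
Definition down (M : model) (w : dom M) r := filter (fun al => dec (~ msat i j M w al)) (At r).

Lemma up_sat M w r : msat i j M w (conjL (up M w r)).
Proof.
  apply conjL_sat. intros al Hal. unfold up in Hal. apply filter_In in Hal as [_ H].
  apply (proj1 (decP _)) in H. exact H.
Qed.
Lemma up_T M N w r (f : dom N) : msat i j N f (conjL (up M w r)) -> T M N r w f.
Proof.
  rewrite conjL_sat. intros H al Hal Hw. apply H. unfold up. apply filter_In.
  split; auto. apply decP. auto.
Qed.
Lemma down_nsat M w r : ~ msat i j M w (disjL (down M w r)).
Proof.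
  rewrite disjL_sat. intros (al & Hal & H). unfold down in Hal.
  apply filter_In in Hal as [_ H1]. apply (proj1 (decP _)) in H1. auto.
Qed.
Lemma down_sat M N w r (c : dom N) : ~ T N M r c w -> msat i j N c (disjL (down M w r)).
Proof.
  intro H. apply notT in H as (al & Hal & Hc & Hw). apply disjL_sat. exists al.
  split; auto. unfold down. apply filter_In. split; auto. apply decP. auto.
Qed.

Lemma base_ok M N : p_base Th M N (AT M N).
Proof.
  intros as_ bs a b P Hl HA HP Ha. apply AT_elim in HA.
  apply (HA (MVar P)); auto. apply (At_mono 0); [lia|]. simpl. apply in_map. auto.
Qed.

Lemma step_ok M N : p_step k M N (AT M N) (AT N M).
Proof.
  intros as_ bs a b d Hl HA Hbd Hk. apply AT_elim in HA.
  replace (k - length as_) with (S (k - S (length as_))) in HA by lia.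
  set (r := k - S (length as_)) in *.
  apply NNPP. intro Hn.
  set (X := MImp (conjL (up N d r)) (disjL (down N d r))).
  assert (HX : msat i j N b X).
  { apply HA. apply At_imp; apply filter_subs.
    simpl. intros c Hac Hc. apply down_sat. intro HT.
    apply Hn. exists c. split; auto.
    assert (T N M r d c) by (apply up_T; auto).
    rewrite !app2. split; apply AT_intro; rewrite ?length_app; simpl; try lia;
      replace (k - (length _ + 1)) with r by lia; auto. }
  apply (down_nsat N d r). apply HX; auto. apply up_sat.
Qed.

Lemma box1_ok M N : i = I1 -> p_box_1 k M N (AT M N).
Proof.
  intros Hi as_ bs a b d Hl HA Hbd Hk. apply AT_elim in HA.
  replace (k - length as_) with (S (k - S (length as_))) in HA by lia.
  set (r := k - S (length as_)) in *.
  apply NNPP. intro Hn.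
  assert (HX : msat i j N b (MBox (disjL (down N d r)))).
  { apply HA. apply At_box; apply filter_subs.
    apply (msat_box1 _ _ _ _ _ Hi). intros c Hac. apply down_sat. intro HT.
    apply Hn. exists c. split; auto.
    rewrite !app2. apply AT_intro; rewrite ?length_app; simpl; try lia;
      replace (k - (length _ + 1)) with r by lia; auto. }
  rewrite (msat_box1 _ _ _ _ _ Hi) in HX. apply (down_nsat N d r). auto.
Qed.

Lemma box2_ok M N : i = I2 -> p_box_2 k M N (AT M N).
Proof.
  intros Hi as_ bs a b d f Hl HA Hbd Hdf Hk. apply AT_elim in HA.
  replace (k - length as_) with (S (S (k - S (S (length as_))))) in HA by lia.
  set (r := k - S (S (length as_))) in *.
  apply NNPP. intro Hn.
  assert (HX : msat i j N b (MBox (disjL (down N f r)))).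
  { apply HA. apply (At_mono (S r)); [lia|]. apply At_box; apply filter_subs.
    apply (msat_box2 _ _ _ _ _ Hi). intros c Hac e Hce. apply down_sat. intro HT.
    apply Hn. exists c, e. split; auto. split; auto.
    rewrite !app3. apply AT_intro; rewrite ?length_app; simpl; try lia;
      replace (k - (length _ + 2)) with r by lia; auto. }
  rewrite (msat_box2 _ _ _ _ _ Hi) in HX. apply (down_nsat N f r). eauto.
Qed.

Lemma dia1_ok M N : j = I1 -> p_diam_1 k M N (AT M N).
Proof.
  intros Hj as_ bs a c b Hl HA Hac Hk. apply AT_elim in HA.
  replace (k - length as_) with (S (k - S (length as_))) in HA by lia.
  set (r := k - S (length as_)) in *.
  assert (HX : msat i j N b (MDia (conjL (up M c r)))).
  { apply HA. apply At_dia1; apply filter_subs.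
    apply (msat_dia1 _ _ _ _ _ Hj). exists c. split; auto. apply up_sat. }
  rewrite (msat_dia1 _ _ _ _ _ Hj) in HX. destruct HX as (d & Hbd & Hd).
  exists d. split; auto.
  rewrite !app2. apply AT_intro; rewrite ?length_app; simpl; try lia;
      replace (k - (length _ + 1)) with r by lia; auto.
  apply up_T; auto.
Qed.

Lemma dia21_ok M N : j = I2 -> p_diam_2_1 k M N (AT M N) (BT M N).
Proof.
  intros Hj as_ bs a b d Hl HA Hbd Hk. apply AT_elim in HA.
  replace (k - length as_) with (S (S (k - S (S (length as_))))) in HA by lia.
  set (r := k - S (S (length as_))) in *.
  apply NNPP. intro Hn.
  set (SS := filter (fun Sl => dec (~ dia N d (conjL Sl))) (subs (At r))).
  assert (HX : msat i j N b (MDia (dnf SS))).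
  { apply HA. apply (At_mono (S r)); [lia|]. apply At_dia2; apply filter_subs.
    apply (msat_dia2 _ _ _ _ _ Hj). intros c Hac.
    assert (HB : ~ TB M N (k - length (as_ ++ [a])) c d).
    { intro HB. apply Hn. exists c. split; auto. rewrite !app2.
      exists (as_ ++ [a]), (bs ++ [b]), c, d. rewrite !length_app. simpl. repeat split; try reflexivity; try lia. rewrite length_app in HB. exact HB. }
    apply NNPP. intro H1. apply HB. intros Sl HS Hc.
    replace (k - length (as_ ++ [a]) - 1) with r in HS by (rewrite length_app; simpl; lia).
    apply NNPP. intro H2. apply H1. destruct Hc as (e & Hce & He). exists e. split; auto.
    apply dnf_sat. exists Sl. split; auto. unfold SS. apply filter_In. split; auto.
    apply decP. auto. }
  rewrite (msat_dia2 _ _ _ _ _ Hj) in HX. destruct (HX d Hbd) as (f & Hdf & Hf).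
  apply dnf_sat in Hf as (Sl & HS & Hf). unfold SS in HS. apply filter_In in HS as [_ HS].
  apply (proj1 (decP _)) in HS. apply HS. exists f. auto.
Qed.

Lemma dia22_ok M N : p_diam_2_2 k M N (AT M N) (BT M N).
Proof.
  intros as_ bs a c b Hl HB Hac Hk. apply BT_elim in HB.
  set (r := k - S (length as_)) in *.
  assert (HX : dia N b (conjL (up M c r))).
  { apply HB. replace (k - length as_ - 1) with r by lia. apply filter_subs.
    exists c. split; auto. apply up_sat. }
  destruct HX as (d & Hbd & Hd).
  exists d. split; auto.
  rewrite !app2. apply AT_intro; rewrite ?length_app; simpl; try lia;
      replace (k - (length _ + 1)) with r by lia; auto.
  apply up_T; auto.
Qed.

Lemma dir_ok M N : dir_conds Th k M N (AT M N) (BT M N) (AT N M) i j.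
Proof.
  split; [apply base_ok|split; [apply step_ok|split]].
  - destruct i eqn:E; [apply box1_ok|apply box2_ok]; auto.
  - destruct j eqn:E; [apply dia1_ok; auto|split; [apply dia21_ok; auto|apply dia22_ok]].
Qed.

Lemma asim_ok M N (w : dom M) (f : dom N) : T M N k w f ->
  modal_asim i j Th k M w N f (AT M N) (BT M N) (AT N M) (BT N M).
Proof.
  intro H. split; [apply AT_type|split; [apply AT_type|split]].
  - destruct j; [exact I|split; apply BT_type].
  - split; [|split; apply dir_ok].
    apply (AT_intro M N [] [] w f); auto. simpl. rewrite Nat.sub_0_r. exact H.
Qed.
End Back.
Fixpoint pvars (phi : fo) : list nat :=
  match phi with
  | FP n _ => [n]
  | FImp p q | FOr p q | FAnd p q => pvars p ++ pvars q
  | FAll _ p | FEx _ p => pvars p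
  | _ => []
  end.

Lemma occ_pvars n phi : occursP n phi -> In n (pvars phi).
Proof.
  induction phi; simpl; try tauto; try (intros ->; left; reflexivity);
  intros [H|H]; apply in_or_app; auto.
Qed.

Lemma sat_at_iff M x phi (a : dom M) (g : nat -> dom M) :
  (forall v, free_in v phi -> v = x) -> g x = a -> (sat_at M a x phi <-> sat M g phi).
Proof.
  intros Hf Hg. split.
  - intros H. apply H. exact Hg.
  - intros H g' Hg'. apply (sat_ext M phi g g'); auto.
    intros v Hv. rewrite (Hf v Hv). congruence.
Qed.

Lemma fwd i j x phi I Th M1 t M2 u A12 B12 A21 B21 :
  (forall v, free_in v phi -> v = x) ->
  log_equiv phi (ST i j I x) -> (forall n, occursP n phi -> Th n) ->
  modal_asim i j Th (mdepth i j I) M1 t M2 u A12 B12 A21 B21 ->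
  forall a b, A12 [a] [b] -> sat_at M1 a x phi -> sat_at M2 b x phi.
Proof.
  intros Hf HI HTh (_ & _ & _ & _ & D1 & D2) a b Hab Ha g Hg.
  assert (Hocc : forall (M : model), forall n, occursP n phi -> forall a,
     (Th n /\ iP M n a) <-> iP M n a).
  { intros M n Hn a0. split; [tauto|]. intros; split; auto. }
  assert (H1 : sat (mask Th M1) (fun _ => a) phi).
  { apply sat_maskP; [apply Hocc|]. apply Ha. reflexivity. }
  apply HI, ST_msat in H1. simpl in H1.
  assert (H2 : msat i j (mask Th M2) b I).
  { apply (pres i j (mdepth i j I) Th I (mask Th M1) (mask Th M2) A12 B12 A21 B21)
      with (as_ := []) (bs := []) (a := a); simpl; auto.
    - intros P a0 [HP _]. exact HP.
    - intros P a0 [HP _]. exact HP.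
    - apply mask_dir; exact D1.
    - apply mask_dir; exact D2. }
  rewrite <- Hg in H2. apply (ST_msat i j (mask Th M2) I x g) in H2.
  apply HI in H2. apply sat_maskP in H2; [exact H2|apply Hocc].
Qed.

Theorem theorem1 (i j : idx) (x : nat) (phi : fo) :
  (forall v, free_in v phi -> v = x) ->
  ((exists I : mform, log_equiv phi (ST i j I x)) <->
   (exists k : nat, invariant i j k x phi)).
Proof.
  intros Hf. split.
  - intros [I HI]. exists (mdepth i j I). intros Th HTh M1 t M2 u.
    destruct j.
    + intros A12 A21 Has. eapply fwd; eauto.
    + intros A12 B12 A21 B21 Has. eapply fwd; eauto.
  - intros [k Hinv].
    set (Th := fun n => occursP n phi).
    set (vs := pvars phi).
    assert (Hvs : forall n, Th n -> In n vs) by (intros n Hn; apply occ_pvars; exact Hn).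
    set (Q := fun Sl => forall (M' : model) (f : dom M'), msat i j M' f (conjL Sl) -> sat_at M' f x phi).
    set (I := dnf (filter (fun Sl => dec (Q Sl)) (subs (At vs k)))).
    assert (Key : forall M (w : dom M), sat_at M w x phi <-> msat i j M w I).
    { intros M w. split.
      - intros Hw. apply dnf_sat. exists (up i j vs M w k). split; [|apply up_sat].
        apply filter_In. split; [apply filter_subs|]. apply decP.
        intros M' f Hf'. apply (up_T i j vs M M' w k f) in Hf'.
        pose proof (asim_ok i j k Th vs Hvs M M' w f Hf') as Has.
        specialize (Hinv Th (fun n H => H) M w M' f).
        assert (Hwf : AT i j k vs M M' [w] [f]) by (destruct Has as (_ & _ & _ & H & _); exact H).
        destruct j.
        + exact (Hinv _ _ Has w f Hwf Hw).
        + exact (Hinv _ _ _ _ Has w f Hwf Hw).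
      - intros Hw. apply dnf_sat in Hw as (Sl & HS & H).
        apply filter_In in HS as [_ HS]. apply (proj1 (decP _)) in HS. exact (HS M w H). }
    exists I. intros M g. rewrite ST_msat, <- Key.
    symmetry. apply sat_at_iff; auto.
Qed.
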